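(* The $3$-form $\varphi=e^{127}+e^{347}+e^{567}+e^{135}-e^{146}-e^{236}-e^{245}$ on the Lie algebra $\mathfrak{g}$ described in the context is coclosed ($d\ast\varphi=0$) if and only if $\operatorname{tr}(A)=0$ and $\theta(A)\omega_7+\theta(B)\omega_1+\theta(C)\omega_2=\operatorname{tr}(A_1)\,\omega_7$.
   Context: $\mathfrak{g}$ is a $7$-dimensional Lie algebra with basis $\{e_1,\dots,e_7\}$, dual basis $\{e^i\}$, $e^{ij\dots}=e^i\wedge e^j\wedge\cdots$, bracket given by $A_1=\operatorname{ad}e_7|_{\operatorname{span}\{e_1,e_2\}}=\begin{pmatrix}x&z\\ y&w\end{pmatrix}$, $A=\operatorname{ad}e_7|_{\mathfrak{g}_1}$, $B=\operatorname{ad}e_1|_{\mathfrak{g}_1}$, $C=\operatorname{ad}e_2|_{\mathfrak{g}_1}$, with $\mathfrak{g}_1=\operatorname{span}\{e_3,\dots,e_6\}$ an abelian ideal, $\operatorname{span}\{e_1,e_2\}$ abelian, $\operatorname{span}\{e_7,e_1,e_2\}$ a subalgebra, $\operatorname{tr}B=\operatorname{tr}C=0$, $[A,B]=xB+yC$, $[A,C]=zB+wC$, $[B,C]=0$. $\ast$ is the Hodge star of the metric and orientation induced by $\varphi$ (making $\{e_i\}$ oriented orthonormal). $\omega_7=e^{34}+e^{56}$, $\omega_1=e^{35}-e^{46}$, $\omega_2=-e^{36}-e^{45}$; for $M\in\mathfrak{gl}(\mathfrak{g}_1)$, $\theta(M)\alpha(v_1,\dots,v_k)=-\alpha(Mv_1,\dots,v_k)-\dots-\alpha(v_1,\dots,Mv_k)$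 on $\Lambda^k\mathfrak{g}_1^*$. *)

(* Defs.v *)
(* Forms on the 7-dim Lie algebra g are represented by
   their values on tuples of basis vectors: a k-form alpha is a function
   seq 'I_7 -> R, alpha [:: i1; ...; ik] = alpha(e_{i1+1}, ..., e_{ik+1})
   (0-based ordinal i stands for the paper's e_{i+1}). *)
From HB Require Import structures.
From mathcomp Require Import all_boot all_order all_algebra.
From mathcomp Require Import reals.
Set Implicit Arguments. Unset Strict Implicit. Unset Printing Implicit Defensive.
Import Order.TTheory GRing.Theory Num.Theory.
Local Open Scope ring_scope.

Section G2Defs.
Variable R : realType.

(* e^{I} = e^{i1} /\ ... /\ e^{ik}, evaluated on (e_{s1},...,e_{sk}):
   det [ e^{ia}(e_{sb}) ]_{a,b}; zero on tuples of the wrong length. *)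
Definition basis_form (I s : seq 'I_7) : R :=
  if size s == size I then
    \det (\matrix_(a < size I, b < size I)
            ((nth ord0 I a == nth ord0 s b)%:R : R))
  else 0.

(* e^{l1 l2 ...} with the paper's 1-based indices *)
Definition E (l : seq nat) : seq 'I_7 -> R :=
  basis_form [seq @inord 6 n.-1 | n <- l].

Definition phi (s : seq 'I_7) : R :=
  E [:: 1; 2; 7]%N s + E [:: 3; 4; 7]%N s + E [:: 5; 6; 7]%N s
  + E [:: 1; 3; 5]%N s - E [:: 1; 4; 6]%N s - E [:: 2; 3; 6]%N s
  - E [:: 2; 4; 5]%N s.

(* Riemannian volume form e^{1234567} of the metric making {e_i}
   oriented orthonormal *)
Definition vol (s : seq 'I_7) : R := basis_form (enum 'I_7) s.

Definition hodge (k : nat) (alpha : seq 'I_7 -> R) (J : seq 'I_7) : R :=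
  (k`!%:R)^-1 * \sum_(I : k.-tuple 'I_7) vol (I ++ J) * alpha I.

(* Chevalley--Eilenberg differential for structure constants c,
   [e_i, e_j] = sum_l c i j l e_l:
   d alpha(x_0..x_k) = sum_{a<b} (-1)^(a+b) alpha([x_a,x_b], x_0,..^a..^b..,x_k) *)
Definition drop2 (s : seq 'I_7) (a b : nat) : seq 'I_7 :=
  [seq nth ord0 s k | k <- iota 0 (size s) & (k != a) && (k != b)].

Definition dform (c : 'I_7 -> 'I_7 -> 'I_7 -> R) (alpha : seq 'I_7 -> R)
    (s : seq 'I_7) : R :=
  \sum_(a < size s) \sum_(b < size s | (a < b)%N)
     (-1) ^+ (a + b) *
     \sum_(l : 'I_7) c (nth ord0 s a) (nth ord0 s b) l * alpha (l :: drop2 s a b).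

Definition mat2 (x y z w : R) : 'M[R]_2 :=
  \matrix_(i < 2, j < 2)
    (if i == 0 :> nat then (if j == 0 :> nat then x else z)
     else (if j == 0 :> nat then y else w)).

(* index of g_1 = span{e3,...,e6}: ordinal j of 'I_7 (j in 2..5) -> j-2 in 'I_4 *)
Definition g1i (j : 'I_7) : 'I_4 := @inord 3 (j - 2).
Definition ing1 (j : 'I_7) : bool := (2 <= j <= 5)%N.

(* "one-sided" brackets: coefficient of e_l in [e_i, e_j] for
   i = e7 acting on span{e1,...,e6} (via A_1 and A) and
   i = e1, e2 acting on g_1 (via B, C). *)
Definition br (x y z w : R) (A B C : 'M[R]_4) (i j l : 'I_7) : R :=
  if ing1 j && ing1 l then
    (if i == 6 :> nat then A (g1i l) (g1i j)
     else if i == 0 :> nat then B (g1i l) (g1i j)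
     else if i == 1 :> nat then C (g1i l) (g1i j) else 0)
  else if [&& (j <= 1)%N, (l <= 1)%N & (i == 6 :> nat)] then
    mat2 x y z w (@inord 1 l) (@inord 1 j)
  else 0.

Definition bracket (x y z w : R) (A B C : 'M[R]_4) (i j l : 'I_7) : R :=
  br x y z w A B C i j l - br x y z w A B C j i l.

(* 2-forms on g_1, by their values on pairs of basis vectors of g_1;
   ordinal a : 'I_4 stands for e_{a+3}. *)
Definition f2 (p q : nat) (a b : 'I_4) : R :=
  ((a + 3 == p)%N && (b + 3 == q)%N)%:R - ((a + 3 == q)%N && (b + 3 == p)%N)%:R.

Definition om7 (a b : 'I_4) : R := f2 3 4 a b + f2 5 6 a b.
Definition om1 (a b : 'I_4) : R := f2 3 5 a b - f2 4 6 a b.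
Definition om2 (a b : 'I_4) : R := - f2 3 6 a b - f2 4 5 a b.

Definition theta (M : 'M[R]_4) (alpha : 'I_4 -> 'I_4 -> R) (a b : 'I_4) : R :=
  - (\sum_(k < 4) M k a * alpha k b) - (\sum_(k < 4) M k b * alpha a k).

End G2Defs.

(* Main.v *)
Require Import Defs.
From HB Require Import structures.
From mathcomp Require Import all_boot all_order all_algebra.
From mathcomp Require Import reals.
From mathcomp Require Import zify ring.
Import Order.TTheory GRing.Theory Num.Theory.
Local Open Scope ring_scope.
Definition sumz (l : seq int) : int := foldr (fun a b => a + b) 0 l.
Definition rem_at {T} (b : nat) (s : seq T) := take b s ++ drop b.+1 s.
Fixpoint bfc (I s : seq nat) {struct I} : int :=
  match I with
  | [::] => if s is [::] then 1 else 0
  | i :: I' => if size s == (size I').+1 then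
       sumz [seq (if i == nth 0%N s b then (-1) ^+ b * bfc I' (rem_at b s) else 0)
            | b <- iota 0 (size s)]
     else 0
  end.

Arguments sumz : simpl never.
Lemma sumzE (T : Type) (f : T -> int) r : sumz (map f r) = \sum_(i <- r) f i.
Proof. by elim: r => [|a r IH]; rewrite ?big_nil ?big_cons // -IH. Qed.

Lemma nth_rem_at {T} (x0 : T) (s : seq T) j b : (j < size s)%N ->
  nth x0 (rem_at j s) b = nth x0 s (bump j b).
Proof.
move=> hj; rewrite /rem_at nth_cat size_take hj /bump.
case: ltnP => hb.
  by rewrite nth_take // add0n.
by rewrite nth_drop; congr nth; lia.
Qed.

Lemma size_rem_at {T} (s : seq T) j : (j < size s)%N -> size (rem_at j s) = (size s).-1.
Proof.
move=> hj; rewrite /rem_at size_cat size_take hj size_drop.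
lia.
Qed.

Lemma basis_form_bfc (R : realType) (I s : seq 'I_7) :
  basis_form R I s = (bfc (map val I) (map val s))%:~R.
Proof.
elim: I s => [|i I IH] s.
  rewrite /basis_form /=; case: s => [|t s] //=.
  by rewrite det_mx00.
rewrite /basis_form /= !size_map.
case: ifP => Hs; last by rewrite mulr0z.
have /eqP Hs' := Hs.
rewrite (expand_det_row _ ord0) sumzE rmorph_sum /= Hs'.
have -> : iota 0 (size I).+1 = index_iota 0 (size I).+1 by rewrite /index_iota subn0.
rewrite big_mkord; apply: eq_bigr => j _.
have hj : (j < size s)%N by rewrite Hs'.
rewrite (nth_map ord0) // !mxE /cofactor add0n.
have -> : \det (row' ord0 (col' j (\matrix_(a, b) ((nth ord0 (i :: I) a == nth ord0 s b)%:R : R))))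
   = basis_form R I (rem_at j s).
  rewrite /basis_form size_rem_at // Hs' /= eqxx.
  congr (\det _); apply/matrixP => a b; rewrite !mxE.
  by rewrite nth_rem_at.
rewrite IH /rem_at map_cat map_take map_drop -/(rem_at _ _).
have -> : nth ord0 (i :: I) ord0 = i by []. 
case: ifP => /eqP e.
  by rewrite (val_inj e) eqxx /= mul1r intrM intr_sign.
have -> : (i == nth ord0 s j) = false by apply/eqP => h; apply: e; rewrite h.
by rewrite mul0r.
Qed.

Lemma bfc_size I s : size s != size I -> bfc I s = 0.
Proof. by case: I => [|i I] /=; [case: s | move/negPf => ->]. Qed.

Arguments bfc : simpl never.

Lemma intr_sum (R : pzRingType) (T : Type) (r : seq T) (f : T -> int) :
  (\sum_(i <- r) f i)%:~R = \sum_(i <- r) (f i)%:~R :> R.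
Proof. by elim: r => [|a r IH]; rewrite ?big_nil ?big_cons ?intrD ?IH. Qed.

Definition phic (sv : seq nat) : int :=
  bfc [:: 0; 1; 6]%N sv + bfc [:: 2; 3; 6]%N sv + bfc [:: 4; 5; 6]%N sv
  + bfc [:: 0; 2; 4]%N sv - bfc [:: 0; 3; 5]%N sv - bfc [:: 1; 2; 5]%N sv
  - bfc [:: 1; 3; 4]%N sv.

Lemma intr7 (R : realType) (a b c d e f g : int) :
  a%:~R + b%:~R + c%:~R + d%:~R - e%:~R - f%:~R - g%:~R = (a + b + c + d - e - f - g)%:~R :> R.
Proof. by rewrite !intrD !intrN. Qed.

Lemma phi_c (R : realType) s : phi R s = (phic (map val s))%:~R.
Proof.
rewrite /phi /E !basis_form_bfc /= !inordK //.
rewrite /phic; exact: intr7.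
Qed.

Lemma vol_c (R : realType) s : vol R s = (bfc (iota 0 7) (map val s))%:~R.
Proof. by rewrite /vol basis_form_bfc val_enum_ord. Qed.

Fixpoint sumL (n : nat) (g : seq nat -> int) : int :=
  match n with
  | 0 => g [::]
  | n'.+1 => sumz [seq sumL n' (fun l => g (i :: l)) | i <- iota 0 7]
  end.

Lemma tuple_sum_cons (V : nmodType) (n : nat) (F : seq 'I_7 -> V) :
  \sum_(t : n.+1.-tuple 'I_7) F t = \sum_(x : 'I_7) \sum_(t : n.-tuple 'I_7) F (x :: t).
Proof.
rewrite pair_big /=.
pose h (p : 'I_7 * n.-tuple 'I_7) : n.+1.-tuple 'I_7 := [tuple of p.1 :: p.2].
pose g (t : n.+1.-tuple 'I_7) : 'I_7 * n.-tuple 'I_7 := (thead t, [tuple of behead t]).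
rewrite (reindex h) /=; last first.
  exists g => [[a t] _|t _].
    by rewrite /g /h /= theadE; congr pair; apply: val_inj.
  by rewrite /g /h /= [in RHS](tuple_eta t).
by [].
Qed.

Lemma tuple_sum (n : nat) (g : seq nat -> int) :
  \sum_(t : n.-tuple 'I_7) g (map val t) = sumL n g.
Proof.
elim: n g => [|n IH] g.
  rewrite (big_pred1 [tuple]) //= => t; apply/esym/eqP/tuple0.
rewrite (@tuple_sum_cons _ _ (fun s => g (map val s))).
have -> : sumL n.+1 g = sumz [seq sumL n (fun l => g (i :: l)) | i <- iota 0 7] by [].
rewrite sumzE.
have -> : iota 0 7 = index_iota 0 7 by [].
rewrite big_mkord; apply: eq_bigr => i _.
by rewrite -IH.
Qed.

Fixpoint allL (n : nat) (f : seq nat -> bool) : bool :=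
  match n with
  | 0 => f [::]
  | n'.+1 => all (fun i => allL n' (fun l => f (i :: l))) (iota 0 7)
  end.

Lemma allLP n f : allL n f -> forall t : seq 'I_7, size t = n -> f (map val t).
Proof.
elim: n f => [|n IH] f.
  by move=> h [|].
move=> h [|i t] // [ht].
have hi : allL n (fun l => f (val i :: l)).
  by apply: (allP h); rewrite mem_iota /= add0n ltn_ord.
exact: (IH _ hi t ht).
Qed.

Lemma eq_sumL n g1 g2 : g1 =1 g2 -> sumL n g1 = sumL n g2.
Proof.
elim: n g1 g2 => [|n IH] g1 g2 e; first exact: e.
change (sumz [seq sumL n (fun l => g1 (i :: l)) | i <- iota 0 7] = sumz [seq sumL n (fun l => g2 (i :: l)) | i <- iota 0 7]).
by congr sumz; apply: eq_map => i; apply: IH => l; apply: e.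
Qed.

Definition psit (Jv : seq nat) : int :=
  bfc [:: 0; 1; 2; 3]%N Jv + bfc [:: 0; 1; 4; 5]%N Jv + bfc [:: 0; 2; 5; 6]%N Jv
  + bfc [:: 0; 3; 4; 6]%N Jv + bfc [:: 1; 2; 4; 6]%N Jv - bfc [:: 1; 3; 5; 6]%N Jv
  + bfc [:: 2; 3; 4; 5]%N Jv.

Definition hg (Jv Iv : seq nat) : int :=
  let p := phic Iv in if p == 0 then 0 else bfc (iota 0 7) (Iv ++ Jv) * p.

Definition chk_psi : bool := allL 4 (fun Jv => sumL 3 (hg Jv) == 6 * psit Jv).

Lemma chk_psiT : chk_psi.
Proof. vm_compute. reflexivity. Qed.
Definition Pf (R : realType) (x y z w : R) (A B C : 'M[R]_4) (k : nat) : R :=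
  if k == 0 then x else if k == 1 then y else if k == 2 then z else if k == 3 then w
  else if (k < 20)%N then A (inord ((k - 4) %/ 4)) (inord ((k - 4) %% 4))
  else if (k < 36)%N then B (inord ((k - 20) %/ 4)) (inord ((k - 20) %% 4))
  else if (k < 52)%N then C (inord ((k - 36) %/ 4)) (inord ((k - 36) %% 4))
  else 0.
Arguments Pf {R}.

Lemma PA (R : realType) (x y z w : R) (A B C : 'M[R]_4) i j : (i < 4)%N -> (j < 4)%N ->
  Pf x y z w A B C (4 + 4 * i + j) = A (inord i) (inord j).
Proof.
move=> hi hj; rewrite /Pf.
idtac.
rewrite ifT; last lia.
have -> : ((4 + 4 * i + j - 4) %/ 4 = i)%N by lia.
have -> : ((4 + 4 * i + j - 4) %% 4 = j)%N by lia.
by [].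
Qed.

Lemma PB (R : realType) (x y z w : R) (A B C : 'M[R]_4) i j : (i < 4)%N -> (j < 4)%N ->
  Pf x y z w A B C (20 + 4 * i + j) = B (inord i) (inord j).
Proof.
move=> hi hj; rewrite /Pf /=.
rewrite ifT; last lia.
have -> : ((20 + 4 * i + j - 20) %/ 4 = i)%N by lia.
have -> : ((20 + 4 * i + j - 20) %% 4 = j)%N by lia.
by [].
Qed.

Lemma PC (R : realType) (x y z w : R) (A B C : 'M[R]_4) i j : (i < 4)%N -> (j < 4)%N ->
  Pf x y z w A B C (36 + 4 * i + j) = C (inord i) (inord j).
Proof.
move=> hi hj; rewrite /Pf /=.
rewrite ifT; last lia.
have -> : ((36 + 4 * i + j - 36) %/ 4 = i)%N by lia.
have -> : ((36 + 4 * i + j - 36) %% 4 = j)%N by lia.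
by [].
Qed.

Lemma Pbig (R : realType) (x y z w : R) (A B C : 'M[R]_4) k : (52 <= k)%N ->
  Pf x y z w A B C k = 0.
Proof.
move=> hk; rewrite /Pf.
do 4! (rewrite ifF; last by apply/eqP; lia).
by rewrite ifF ?ifF ?ifF //; lia.
Qed.

Definition lin := seq (nat * int).
Definition evalL (R : realType) (P : nat -> R) (l : lin) : R :=
  \sum_(p <- l) p.2%:~R * P p.1.
Arguments evalL {R}.

Lemma evalL_cat (R : realType) (P : nat -> R) l1 l2 :
  evalL P (l1 ++ l2) = evalL P l1 + evalL P l2.
Proof. by rewrite /evalL big_cat. Qed.

Lemma evalL_nil (R : realType) (P : nat -> R) : evalL P [::] = 0.
Proof. by rewrite /evalL big_nil. Qed.

Lemma evalL1 (R : realType) (P : nat -> R) k c : evalL P [:: (k, c)] = c%:~R * P k.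
Proof. by rewrite /evalL big_cons big_nil addr0. Qed.

Definition scl (c : int) (l : lin) : lin := [seq (p.1, c * p.2) | p <- l].

Lemma evalL_scl (R : realType) (P : nat -> R) c l :
  evalL P (scl c l) = c%:~R * evalL P l.
Proof.
rewrite /evalL /scl big_map mulr_sumr; apply: eq_bigr => p _.
by rewrite /= intrM mulrA.
Qed.

Lemma evalL_flatten (R : realType) (P : nat -> R) (T : Type) (r : seq T) (f : T -> lin) :
  evalL P (flatten (map f r)) = \sum_(i <- r) evalL P (f i).
Proof.
elim: r => [|a r IH]; first by rewrite big_nil evalL_nil.
by rewrite /= evalL_cat IH big_cons.
Qed.

Definition key2 (l j : nat) : nat :=
  if l == 0 then (if j == 0 then 0 else 2) else (if j == 0 then 1 else 3).

Definition brn (i j l : nat) : lin :=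
  if (2 <= j <= 5)%N && (2 <= l <= 5)%N then
    (if i == 6 then [:: ((4 + 4 * (l - 2) + (j - 2))%N, 1)]
     else if i == 0 then [:: ((20 + 4 * (l - 2) + (j - 2))%N, 1)]
     else if i == 1 then [:: ((36 + 4 * (l - 2) + (j - 2))%N, 1)] else [::])
  else if [&& (j <= 1)%N, (l <= 1)%N & (i == 6)] then [:: (key2 l j, 1)]
  else [::].

Definition bn (i j l : nat) : lin := brn i j l ++ scl (-1) (brn j i l).

Lemma br_c (R : realType) (x y z w : R) (A B C : 'M[R]_4) (i j l : 'I_7) :
  br x y z w A B C i j l = evalL (Pf x y z w A B C) (brn i j l).
Proof.
rewrite /br /brn /ing1 /g1i.
case: ifP => H1.
  have hl : (l - 2 < 4)%N by move: H1 => /andP[_ /andP[] ]; lia.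
  have hj : (j - 2 < 4)%N by move: H1 => /andP[/andP[] ]; lia.
  case: ifP => _; first by rewrite evalL1 PA // mul1r.
  case: ifP => _; first by rewrite evalL1 PB // mul1r.
  case: ifP => _; first by rewrite evalL1 PC // mul1r.
  by rewrite evalL_nil.
case: ifP => H2; last by rewrite evalL_nil.
rewrite evalL1 mul1r mxE.
move: H2 => /and3P[hj hl _].
rewrite !inordK; try lia.
rewrite /key2.
case: (nat_of_ord l) hl => [|[|//]] _; case: (nat_of_ord j) hj => [|[|//]] _ //.
Qed.

Lemma bracket_c (R : realType) (x y z w : R) (A B C : 'M[R]_4) (i j l : 'I_7) :
  bracket x y z w A B C i j l = evalL (Pf x y z w A B C) (bn i j l).
Proof.
by rewrite /bracket /bn evalL_cat evalL_scl !br_c mulN1r.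
Qed.


Lemma hodge_c (R : realType) (J : seq 'I_7) :
  hodge 3 (phi R) J = (psit (map val J))%:~R.
Proof.
case hJ: (size J == 4)%N; last first.
  rewrite /hodge big1 ?mulr0; last first.
    move=> I _; rewrite /vol /basis_form size_cat size_tuple size_enum_ord.
    by rewrite ifF ?mul0r //; apply/eqP; move/eqP: hJ; lia.
  rewrite /psit !bfc_size ?size_map ?hJ //.
have key := @allLP 4 (fun Jv => sumL 3 (hg Jv) == 6 * psit Jv) chk_psiT J (eqP hJ).
rewrite /hodge.
under eq_bigr => I _ do rewrite vol_c phi_c map_cat -intrM.
rewrite -intr_sum (tuple_sum 3 (fun Iv => bfc (iota 0 7) (Iv ++ map val J) * phic Iv)).
rewrite (@eq_sumL 3 _ (hg (map val J))); last first.
  by move=> Iv; rewrite /hg; case: eqP => // ->; rewrite mulr0.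
rewrite (eqP key) intrM.
have -> : (3`!)%:R = (6%:~R : R) by [].
by rewrite mulKf // intr_eq0.
Qed.

Definition drop2n (sv : seq nat) (a b : nat) : seq nat :=
  [seq nth 0%N sv k | k <- iota 0 (size sv) & (k != a) && (k != b)].

Definition Lsp (sv : seq nat) : lin :=
  flatten [seq flatten [seq (if (a < b)%N then
     flatten [seq (let L := bn (nth 0%N sv a) (nth 0%N sv b) l in
                   if L is [::] then [::]
                   else scl ((-1) ^+ (a + b) * psit (l :: drop2n sv a b)) L)
             | l <- iota 0 7]
     else [::]) | b <- iota 0 (size sv)] | a <- iota 0 (size sv)].

Lemma evalL_guard (R : realType) (P : nat -> R) (L : lin) c :
  evalL P (if L is [::] then [::] else scl c L) = c%:~R * evalL P L.
Proof. by case: L => [|p L]; rewrite ?evalL_nil ?mulr0 // evalL_scl. Qed.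

Lemma map_drop2 (s : seq 'I_7) a b :
  map val (drop2 s a b) = drop2n (map val s) a b.
Proof.
rewrite /drop2 /drop2n size_map -map_comp; apply/eq_in_map => k.
rewrite mem_filter mem_iota add0n => /andP[_ hk] /=.
by rewrite (nth_map ord0).
Qed.

Lemma dform_c (R : realType) (x y z w : R) (A B C : 'M[R]_4) (s : seq 'I_7) :
  dform (bracket x y z w A B C) (hodge 3 (phi R)) s
  = evalL (Pf x y z w A B C) (Lsp (map val s)).
Proof.
set P := Pf x y z w A B C.
rewrite /dform /Lsp (evalL_flatten _ P) size_map.
have -> : iota 0 (size s) = index_iota 0 (size s) by rewrite /index_iota subn0.
rewrite big_mkord; apply: eq_bigr => a _.
rewrite (@evalL_flatten R P nat) big_mkord big_mkcond; apply: eq_bigr => b _.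
rewrite (fun_if (evalL P)) evalL_nil (evalL_flatten _ P).
have -> : iota 0 7 = index_iota 0 7 by [].
rewrite big_mkord mulr_sumr.
apply: (congr1 (fun v => if (a < b)%N then v else 0)).
apply: eq_bigr => l _.
rewrite evalL_guard bracket_c hodge_c /= map_drop2.
rewrite !(nth_map ord0) // intrM intr_sign.
by rewrite [evalL _ _ * _]mulrC mulrA.
Qed.


Definition coefk (L : lin) (k : nat) : int :=
  sumz [seq (if p.1 == k then p.2 else 0) | p <- L].
Definition dense (L : lin) : seq int := [seq coefk L k | k <- iota 0 52].

Lemma evalL_dense (R : realType) (P : nat -> R) (hP : forall k, (52 <= k)%N -> P k = 0) L :
  evalL P L = \sum_(0 <= k < 52) (coefk L k)%:~R * P k.
Proof.
elim: L => [|[k c] L IH].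
  rewrite evalL_nil big1 // => i _; by rewrite /coefk /sumz /= mul0r.
rewrite /evalL big_cons -/(evalL P L) IH /=.
rewrite [RHS](eq_bigr (fun i => ((if k == i then c else 0) + coefk L i)%:~R * P i)); last by move=> i _; reflexivity.
symmetry; under eq_bigr => i _ do rewrite intrD mulrDl.
rewrite big_split /=; congr (_ + _).
under eq_bigr => i _ do rewrite (fun_if (fun v : int => v%:~R * P i)) mul0r.
rewrite -big_mkcond /=.
under eq_bigl => i do rewrite eq_sym.
rewrite big_nat1_eq; case: ifP => // hk.
by rewrite hP ?mulr0 //; move/negbT: hk; lia.
Qed.

Lemma dense_eq (R : realType) (P : nat -> R) (hP : forall k, (52 <= k)%N -> P k = 0) L1 L2 :
  dense L1 = dense L2 -> evalL P L1 = evalL P L2.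
Proof.
move=> h; rewrite !(evalL_dense _ _ hP); apply: eq_big_nat => k hk.
have : nth 0 (dense L1) k = nth 0 (dense L2) k by rewrite h.
by rewrite /dense !(nth_map 0%N) ?size_iota ?nth_iota //; try lia; move=> ->.
Qed.

Definition allowed (Z : seq lin) : seq (seq int) :=
  dense [::] :: flatten [seq [:: dense e; dense (scl (-1) e)] | e <- Z].

Lemma allowed_zero (R : realType) (P : nat -> R) (hP : forall k, (52 <= k)%N -> P k = 0)
  (Z : seq lin) L :
  (forall e, e \in Z -> evalL P e = 0) -> dense L \in allowed Z -> evalL P L = 0.
Proof.
move=> hZ; rewrite inE => /orP[/eqP h|].
  by rewrite (dense_eq _ _ hP _ _ h) evalL_nil.
move=> /flattenP [v /mapP [e he ->]]; rewrite !inE => /orP[/eqP h|/eqP h].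
  by rewrite (dense_eq _ _ hP _ _ h) hZ.
by rewrite (dense_eq _ _ hP _ _ h) evalL_scl hZ // mulr0.
Qed.

Lemma PA' (R : realType) (x y z w : R) (A B C : 'M[R]_4) (i j : 'I_4) :
  A i j = Pf x y z w A B C (4 + 4 * i + j)%N.
Proof. by rewrite PA // !inord_val. Qed.
Lemma PB' (R : realType) (x y z w : R) (A B C : 'M[R]_4) (i j : 'I_4) :
  B i j = Pf x y z w A B C (20 + 4 * i + j)%N.
Proof. by rewrite PB // !inord_val. Qed.
Lemma PC' (R : realType) (x y z w : R) (A B C : 'M[R]_4) (i j : 'I_4) :
  C i j = Pf x y z w A B C (36 + 4 * i + j)%N.
Proof. by rewrite PC // !inord_val. Qed.

Definition etr (base : nat) : lin := [seq ((base + 4 * i + i)%N, 1) | i <- iota 0 4].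

Lemma tr_c (R : realType) (P : nat -> R) (M : 'M[R]_4) base
  (hM : forall i j : 'I_4, M i j = P (base + 4 * i + j)%N) :
  \tr M = evalL P (etr base).
Proof.
rewrite /evalL big_map /mxtrace.
have -> : iota 0 4 = index_iota 0 4 by [].
rewrite big_mkord; apply: eq_bigr => i _.
by rewrite hM /= mul1r.
Qed.

Definition f2n (p q a b : nat) : int :=
  ((a + 3 == p) && (b + 3 == q))%:Z - ((a + 3 == q) && (b + 3 == p))%:Z.
Definition om7n (a b : nat) : int := f2n 3 4 a b + f2n 5 6 a b.
Definition om1n (a b : nat) : int := f2n 3 5 a b - f2n 4 6 a b.
Definition om2n (a b : nat) : int := - f2n 3 6 a b - f2n 4 5 a b.

Lemma f2_c (R : realType) p q (a b : 'I_4) : f2 R p q a b = (f2n p q a b)%:~R.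
Proof. by rewrite /f2 /f2n intrB. Qed.
Lemma om7_c (R : realType) (a b : 'I_4) : om7 R a b = (om7n a b)%:~R.
Proof. by rewrite /om7 /om7n intrD !f2_c. Qed.
Lemma om1_c (R : realType) (a b : 'I_4) : om1 R a b = (om1n a b)%:~R.
Proof. by rewrite /om1 /om1n intrB !f2_c. Qed.
Lemma om2_c (R : realType) (a b : 'I_4) : om2 R a b = (om2n a b)%:~R.
Proof. by rewrite /om2 /om2n intrB intrN !f2_c. Qed.

Definition thp (base : nat) (omn : nat -> nat -> int) (a b : nat) : lin :=
  [seq ((base + 4 * k + a)%N, - omn k b) | k <- iota 0 4] ++
  [seq ((base + 4 * k + b)%N, - omn a k) | k <- iota 0 4].

Lemma theta_part (R : realType) (P : nat -> R) (M : 'M[R]_4) base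
  (hM : forall i j : 'I_4, M i j = P (base + 4 * i + j)%N)
  (om : 'I_4 -> 'I_4 -> R) (omn : nat -> nat -> int) (hom : forall i j : 'I_4, om i j = (omn i j)%:~R)
  (a b : 'I_4) :
  theta M om a b = evalL P (thp base omn a b).
Proof.
rewrite /theta /thp evalL_cat /evalL !big_map -!sumrN.
have -> : iota 0 4 = index_iota 0 4 by [].
rewrite !big_mkord; congr (_ + _); apply: eq_bigr => k _ /=.
  by rewrite hM hom intrN mulNr mulrC.
by rewrite hM hom intrN mulNr mulrC.
Qed.

Arguments theta_part {R P M base} hM {om omn} hom a b.
Arguments PA' {R} x y z w A B C i j.
Arguments PB' {R} x y z w A B C i j.
Arguments PC' {R} x y z w A B C i j.

Lemma tr_mat2 (R : realType) (x y z w : R) : \tr (mat2 x y z w) = x + w.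
Proof. by rewrite /mxtrace !big_ord_recr big_ord0 /= !mxE /= add0r. Qed.

Definition thn (a b : nat) : lin :=
  thp 4 om7n a b ++ thp 20 om1n a b ++ thp 36 om2n a b ++
  [:: (0%N, - om7n a b); (3%N, - om7n a b)].

Lemma theta_c (R : realType) (x y z w : R) (A B C : 'M[R]_4) (a b : 'I_4) :
  theta A (om7 R) a b + theta B (om1 R) a b + theta C (om2 R) a b
  - \tr (mat2 x y z w) * om7 R a b = evalL (Pf x y z w A B C) (thn a b).
Proof.
rewrite (theta_part (PA' x y z w A B C) (om7_c R)).
rewrite (theta_part (PB' x y z w A B C) (om1_c R)).
rewrite (theta_part (PC' x y z w A B C) (om2_c R)).
rewrite /thn !evalL_cat.
have -> : forall (P : nat -> R) k1 c1 k2 c2, evalL P [:: (k1, c1); (k2, c2)] = c1%:~R * P k1 + c2%:~R * P k2.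
  by move=> P k1 c1 k2 c2; rewrite /evalL !big_cons big_nil addr0.
rewrite tr_mat2 om7_c intrN.
have -> : Pf x y z w A B C 0 = x by [].
have -> : Pf x y z w A B C 3 = w by [].
set e1 := evalL _ _; set e2 := evalL _ _; set e3 := evalL _ _.
set e4 := evalL _ _; set e5 := evalL _ _; set e6 := evalL _ _.
set o := (om7n a b)%:~R.
rewrite !mulNr; ring.
Qed.


Definition thlist : seq lin := [seq thn ab.1 ab.2 | ab <- allpairs pair (iota 0 4) (iota 0 4)].
Definition eqs : seq lin := etr 4 :: etr 20 :: etr 36 :: thlist.

Definition chk1 : bool :=
  let al := allowed eqs in allL 5 (fun sv => dense (Lsp sv) \in al).

Lemma chk1T : chk1.
Proof. vm_compute. reflexivity. Qed.

Definition incr9 : seq (seq nat) :=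
  [:: [:: 0; 1; 2; 3; 6]; [:: 0; 1; 2; 4; 6]; [:: 0; 1; 2; 5; 6]; [:: 0; 1; 3; 4; 6];
      [:: 0; 1; 3; 5; 6]; [:: 0; 1; 4; 5; 6]; [:: 0; 2; 3; 4; 5]; [:: 1; 2; 3; 4; 5];
      [:: 2; 3; 4; 5; 6]]%N.

Definition Z2 : seq lin := [seq Lsp sv | sv <- incr9] ++ [:: etr 20; etr 36].

Definition chk2 : bool :=
  let al := allowed Z2 in all (fun T => dense T \in al) (etr 4 :: thlist).

Lemma chk2T : chk2.
Proof. vm_compute. reflexivity. Qed.

Lemma tup_of (sv : seq nat) : size sv = 5%N -> all (fun i => i < 7)%N sv ->
  exists s : 5.-tuple 'I_7, map val s = sv.
Proof.
move=> hs ha.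
have hs' : size (map (@inord 6) sv) == 5%N by rewrite size_map hs.
exists (Tuple hs'); rewrite /= -map_comp.
transitivity (map id sv); last exact: map_id.
apply/eq_in_map => i hi /=; rewrite inordK //; exact: (allP ha).
Qed.

Theorem corollary2p6 (R : realType) (x y z w : R) (A B C : 'M[R]_4)
  (htrB : \tr B = 0) (htrC : \tr C = 0)
  (hAB : A *m B - B *m A = x *: B + y *: C)
  (hAC : A *m C - C *m A = z *: B + w *: C)
  (hBC : B *m C - C *m B = 0) :
  (forall s : 5.-tuple 'I_7,
      dform (bracket x y z w A B C) (hodge 3 (@phi R)) s = 0)
  <->
  (\tr A = 0 /\
   forall a b : 'I_4,
     theta A (@om7 R) a b + theta B (@om1 R) a b + theta C (@om2 R) a b
     = \tr (mat2 x y z w) * @om7 R a b).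
Proof.
set P := Pf x y z w A B C.
have hP : forall k, (52 <= k)%N -> P k = 0 by move=> k hk; exact: Pbig.
have trA' : \tr A = evalL P (etr 4) := @tr_c _ P A 4 (PA' x y z w A B C).
have trB' : \tr B = evalL P (etr 20) := @tr_c _ P B 20 (PB' x y z w A B C).
have trC' : \tr C = evalL P (etr 36) := @tr_c _ P C 36 (PC' x y z w A B C).
have hth := @theta_c _ x y z w A B C.
have memth : forall a b : 'I_4, thn a b \in thlist.
  move=> a b; apply/mapP; exists (val a, val b) => //.
  by apply: allpairs_f; rewrite mem_iota ltn_ord.
split.
- move=> H.
  have hZ2 : forall e, e \in Z2 -> evalL P e = 0.
    move=> e; rewrite mem_cat => /orP[/mapP[sv hsv ->] | ].
      have hall : all (fun sv => (size sv == 5%N) && all (fun i => i < 7)%N sv) incr9 by [].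
      have /andP[/eqP h1 h2] := allP hall sv hsv.
      have [s <-] := tup_of _ h1 h2.
      by rewrite -dform_c H.
    by rewrite !inE => /orP[/eqP -> | /eqP ->]; rewrite -?trB' -?trC'.
  have key : forall T, T \in etr 4 :: thlist -> evalL P T = 0.
    move=> T hT; apply: (allowed_zero _ _ hP _ _ hZ2).
    exact: (allP chk2T T hT).
  split; first by rewrite trA'; apply: key; rewrite mem_head.
  move=> a b; apply/eqP; rewrite -subr_eq0 hth; apply/eqP; apply: key.
  by rewrite inE memth orbT.
- move=> [hA hth'] s.
  have hZ : forall e, e \in eqs -> evalL P e = 0.
    move=> e; rewrite /eqs in_cons => /orP[/eqP -> | ]; first by rewrite -trA'.
    rewrite in_cons => /orP[/eqP -> | ]; first by rewrite -trB'.
    rewrite in_cons => /orP[/eqP -> | ]; first by rewrite -trC'.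
    move=> he; have [[i j] hij ->] := mapP he.
    have hall : all (fun ab => (ab.1 < 4) && (ab.2 < 4))%N (allpairs pair (iota 0 4) (iota 0 4)) by [].
    have /andP[hi hj] := allP hall _ hij.
    have := hth (Ordinal hi) (Ordinal hj); rewrite /= => <-.
    by rewrite hth' subrr.
  rewrite dform_c; apply: (allowed_zero _ _ hP _ _ hZ).
  exact: (@allLP 5 (fun sv => dense (Lsp sv) \in allowed eqs) chk1T s (size_tuple s)).
Qed.
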